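(* Let $A_1,\ldots,A_r$ be non-empty, pairwise disjoint finite sets and $L=\partial\Delta^{A_1}*\cdots*\partial\Delta^{A_r}$. Then: (1) $\mathbb{R}\mathcal{Z}_L=S^{|A_1|-1}\times\cdots\times S^{|A_r|-1}$ (via $\mathbb{R}\mathcal{Z}_{\partial\Delta^{A_i}}=S^{|A_i|-1}$); (2) if $T=\{(x_1,\ldots,x_r)\in S^{|A_1|-1}\times\cdots\times S^{|A_r|-1}\mid x_i\text{ is the basepoint for some }i\}$ is the fat wedge, then the natural inclusion $T\to\mathbb{R}\mathcal{Z}_L^{|A_1|+\cdots+|A_r|-1}$ is a homotopy equivalence.
   Context: $\Delta^S$ is the full simplex on $S$, $\partial\Delta^S$ its boundary (proper subsets of $S$), $*$ the join. For a simplicial complex $K$ on vertex set $V$ with $|V|=n$, the real moment-angle complex is $\mathbb{R}\mathcal{Z}_K=\bigcup_{\sigma\in K}\prod_{v\in V}Y_v\subset (CS^0)^V$ where $Y_v=CS^0$ (reduced cone, an interval) if $v\in\sigma$ and $Y_v=S^0$ otherwise, with basepoint the basepoint of $S^0$. Its fat wedge filtration is $\mathbb{R}\mathcal{Z}_K^i=\{(x_v)\in\mathbb{R}\mathcal{Z}_K\mid\text{at least }n-i\text{ of the }x_v\text{ are the basepoint}\}$, $0\le i\le n$. The basepoint of $S^{|A_i|-1}=\mathbb{R}\mathcal{Z}_{\partial\Delta^{A_i}}$ is the point with all coordinates at the basepoint. *)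

(* Defs.v *)
From HB Require Import structures.
From mathcomp Require Import all_boot all_order all_algebra.
From mathcomp Require Import all_classical all_reals all_analysis.
Set Implicit Arguments.
Unset Strict Implicit.
Unset Printing Implicit Defensive.
Import Order.TTheory GRing.Theory Num.Theory.
Import numFieldNormedType.Exports.

Definition bdry_simplex (V : finType) (S : {set V}) : {set {set V}} :=
  [set s : {set V} | s \proper S].

Definition sjoin (V : finType) (K1 K2 : {set {set V}}) : {set {set V}} :=
  [set s1 :|: s2 | s1 in K1, s2 in K2].

Definition join_bdry (V : finType) (r : nat) (A : 'I_r -> {set V})
  : {set {set V}} :=
  \big[@sjoin V/[set (@finset.set0 V)]]_(i < r) bdry_simplex (A i).

Definition vert (V : finType) (A : {set V}) := {v : V | v \in A}.

Local Open Scope classical_set_scope.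
Local Open Scope ring_scope.

(** The reduced cone CS^0 is modelled as the
    interval [0,1] with S^0 = {0,1} and basepoint 0 (the cone point). *)
Definition RZ (R : realType) (V : finType) (K : {set {set V}})
  : set {ptws V -> R} :=
  [set x | exists2 s, s \in K &
     forall v, (v \in s -> 0 <= x v <= 1) /\
               (v \notin s -> x v = 0 \/ x v = 1)].
Arguments RZ R {V} K.

Definition RZfw (R : realType) (V : finType) (K : {set {set V}}) (i : nat)
  : set {ptws V -> R} :=
  [set x | RZ R K x /\ (#|V| - i <= #|[set v | x v == 0%R]|)%N].
Arguments RZfw R {V} K i.

Definition fat_wedge (R : realType) (V : finType) (r : nat)
  (A : 'I_r -> {set V}) : set {ptws V -> R} :=
  [set x | RZ R (join_bdry A) x /\
           exists i : 'I_r, forall v, v \in A i -> x v = 0].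
Arguments fat_wedge R {V r} A.

Definition homotopic_on (R : realType) (X Y : topologicalType)
  (A : set X) (B : set Y) (f g : X -> Y) : Prop :=
  exists H : R * X -> Y,
    [/\ {within [set p : R * X | 0 <= p.1 <= 1 /\ A p.2], continuous H},
        (forall t x, 0 <= t <= 1 -> A x -> B (H (t, x))),
        (forall x, A x -> H (0, x) = f x) &
        (forall x, A x -> H (1, x) = g x)].
Arguments homotopic_on R {X Y} A B f g.

Definition homotopy_equivalence_on (R : realType) (X Y : topologicalType)
  (A : set X) (B : set Y) (f : X -> Y) : Prop :=
  [/\ {within A, continuous f}, (forall x, A x -> B (f x)) &
      exists g : Y -> X,
        [/\ {within B, continuous g}, (forall y, B y -> A (g y)),
            homotopic_on R A A (g \o f) id &
            homotopic_on R B B (f \o g) id]].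
Arguments homotopy_equivalence_on R {X Y} A B f.

(* Main.v *)
Require Import Defs.
From HB Require Import structures.
From mathcomp Require Import all_boot all_order all_algebra.
From mathcomp Require Import all_classical all_reals all_analysis.
From mathcomp Require Import lra.
Import Order.TTheory GRing.Theory Num.Theory.
Import numFieldNormedType.Exports.



Lemma join_seq (V : finType) (I : eqType) (K : I -> {set {set V}}) (l : seq I) s :
  uniq l ->
  s \in \big[@sjoin V/[set (@finset.set0 V)]%SET]_(i <- l) K i <->
  exists f : I -> {set V}, (forall i, i \in l -> f i \in K i) /\
     s = (\bigcup_(i <- l) f i)%SET.
Proof.
elim: l s => [|i l IH] s /=.
  move=> _; rewrite big_nil finset.in_set1; split.
    by move/eqP->; exists (fun _ => finset.set0); rewrite big_nil.
  by case=> f [_ ->]; rewrite big_nil.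
case/andP=> il ul; rewrite big_cons; split.
  case/imset2P => s1 s2 s1K /IH [] // f [fK ->] ->.
  exists (fun j => if j == i then s1 else f j); split.
    by move=> j; rewrite inE; case: eqP => [->//|_ /= /fK].
  rewrite big_cons eqxx; congr (_ :|: _); apply: eq_big_seq => j jl.
  by case: eqP jl il => // -> ->.
case=> f [fK ->]; rewrite big_cons; apply/imset2P.
exists (f i) (\bigcup_(j <- l) f j)%SET => //; first by apply: fK; rewrite inE eqxx.
by apply/IH => //; exists f; split => // j jl; apply: fK; rewrite inE jl orbT.
Qed.

Lemma mem_join (V : finType) (r : nat) (A : 'I_r -> {set V}) s :
  s \in join_bdry A <-> exists f : 'I_r -> {set V},
     (forall i, f i \proper A i) /\ s = (\bigcup_(i < r) f i)%SET.
Proof.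
rewrite /join_bdry; rewrite join_seq ?index_enum_uniq //; split.
  case=> f [fK ->]; exists f; split => // i.
  by have := fK i (mem_index_enum i); rewrite inE.
case=> f [fK ->]; exists f; split => // i _; rewrite inE; exact: fK.
Qed.
Section RZs.
Local Open Scope ring_scope.
Variables (R : realType) (V : finType) (r : nat) (A : 'I_r -> {set V}).

Definition inS (x : V -> R) i := (forall v, v \in A i -> 0 <= x v <= 1) /\
  (exists2 v, v \in A i & (x v = 0 \/ x v = 1)).

Lemma RZ_b i (x : V -> R) :
  RZ R (bdry_simplex [set: vert (A i)]) (fun a => x (val a)) <-> inS x i.
Proof.
split.
  case=> s; rewrite inE properT => sT hs.
  have : ~~ ([set: vert (A i)] \subset s) by rewrite finset.subTset.
  case/fintype.subsetPn => a _ an; split.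
    move=> v vA; have := hs (exist _ v vA); case: (boolP (exist _ v vA \in s)) => Hin [h1 h2].
      exact: h1.
    by case: (h2 isT) => /= ->; rewrite ?lexx ?ler01.
  by exists (val a); [exact: (valP a)| case: (hs a) => _; apply].
case=> hb [v vA hv]; exists [set~ (exist _ v vA : vert (A i))].
  rewrite inE properT; apply/eqP => /setP /(_ (exist _ v vA)).
  by rewrite !inE eqxx.
move=> a; split.
  by move=> _; apply: hb; exact: (valP a).
by rewrite !inE negbK => /eqP ->.
Qed.
Hypothesis Adis : forall i j, i != j -> [disjoint A i & A j]%B.
Hypothesis Acov : (\bigcup_(i < r) A i = [set: V])%SET.

Lemma covP v : exists2 j, true & v \in A j.
Proof.
have : v \in [set: V] by rewrite finset.in_setT.
by rewrite -Acov => /bigcupP [j _ vj]; exists j.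
Qed.

Lemma RZ_L (x : V -> R) : RZ R (join_bdry A) x <-> forall i, inS x i.
Proof.
split.
  case=> s /mem_join [f [fp ->]] hs i.
  have [_ [a aA anf]] := properP (fp i).
  have anU : a \notin (\bigcup_(j < r) f j)%SET.
    apply/bigcupP => -[j _ aj].
    have [ij|ij] := eqVneq i j; first by move: aj; rewrite -ij (negbTE anf).
    have := Adis i j ij => /disjointFr /(_ aA).
    have [+ _] := properP (fp j) => /fintype.subsetP /(_ _ aj) -> //.
  split.
    move=> v vA; case: (boolP (v \in (\bigcup_(j < r) f j)%SET)) => vU.
      exact: ((hs v).1 vU).
    by case: ((hs v).2 vU) => ->; rewrite ?lexx ?ler01.
  by exists a => //; apply: (hs a).2.
move=> h.
exists (\bigcup_(i < r) [set v in A i | (0 < x v < 1)])%SET.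
  apply/mem_join; eexists; split; last by reflexivity.
  move=> i; apply/properP; split.
    by apply/fintype.subsetP => v; rewrite inE => /andP[].
  have [v vA hv] := (h i).2; exists v => //.
  by rewrite inE vA /=; case: hv => ->; rewrite ?ltxx ?andbF.
move=> v; split.
  by case/bigcupP => j _; rewrite inE => /andP[vA _]; apply: (h j).1.
move=> vn; have [j _ vj] := covP v.
have /andP[x0 x1] := (h j).1 v vj.
have : ~~ (0 < x v < 1).
  apply: contra vn => hx; apply/bigcupP; exists j => //; rewrite inE vj.
  exact: hx.
rewrite !lt_neqAle x0 x1 /= !andbT negb_and !negbK.
by case/orP => /eqP; [left | right].
Qed.
End RZs.
Arguments inS {R V r} A x i.

Section X.
Local Open Scope ring_scope.
Variables (V : finType) (r : nat) (A : 'I_r -> {set V}).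
Hypothesis Adis : forall i j, i != j -> [disjoint A i & A j]%B.
Hypothesis Acov : (\bigcup_(i < r) A i = [set: V])%SET.
Lemma covP0 v : exists2 j, true & v \in A j.
Proof.
have : v \in [set: V] by rewrite finset.in_setT.
by rewrite -Acov => /bigcupP [j _ vj]; exists j.
Qed.
Lemma sumA : (\sum_(i < r) #|A i|)%N = #|V|.
Proof.
transitivity (\sum_(i < r) \sum_(v : V) (if v \in A i then 1 else 0))%N.
  by apply: eq_bigr => i _; rewrite -sum1_card big_mkcond.
rewrite exchange_big /= -sum1_card; apply: eq_bigr => v _.
have [j _ vj] := covP0 v.
rewrite (bigD1 j) //= vj big1 // => i ij.
by case vi: (v \in A i) => //; have := disjointFr (Adis i j ij) vi; rewrite vj.
Qed.
End X.


Section H.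
Local Open Scope ring_scope.
Variables (R : realType) (V : finType) (r : nat) (A : 'I_r -> {set V}).
Hypothesis Adis : forall i j, i != j -> [disjoint A i & A j]%B.

Definition blk v : {set V} := (\bigcup_(j < r | v \in A j) A j)%SET.
Lemma blkE i v : v \in A i -> blk v = A i.
Proof.
move=> vi; apply/setP => w; apply/bigcupP/idP.
  case=> j vj wj; have [->//|ij] := eqVneq i j.
  by have := disjointFr (Adis i j ij) vi; rewrite vj.
by move=> wi; exists i.
Qed.
Arguments blkE {i v} _.

Definition mv (x : V -> R) v := \big[Num.min/1]_(w in blk v) x w.
Definition cl (u : R) := Num.max 0 (Num.min 1 u).
Definition sv t x v := t * (1 - mv x v).
Definition Hm (p : R * (V -> R)) : V -> R := fun v =>
  cl ((1 + 2 * sv p.1 p.2 v) * (p.2 v - sv p.1 p.2 v)).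

Lemma cl01 u : 0 <= cl u <= 1.
Proof. by rewrite /cl le_max lexx ge_max ler01 ge_min lexx. Qed.
Lemma cl_le0 u : u <= 0 -> cl u = 0.
Proof.
move=> u0; rewrite /cl max_l //; rewrite ge_min; apply/orP; right; exact: u0.
Qed.
Lemma cl_ge1 u : 1 <= u -> cl u = 1.
Proof. by move=> u1; rewrite /cl min_l // max_r // ler01. Qed.
Lemma cl_id u : 0 <= u <= 1 -> cl u = u.
Proof. by case/andP => u0 u1; rewrite /cl min_r // max_r. Qed.

Lemma mv_le1 x v : mv x v <= 1.
Proof.
rewrite /mv; elim/big_rec: _ => [|w y _ IH]; first exact: lexx.
by rewrite ge_min IH orbT.
Qed.
Lemma mv_le x v w : w \in blk v -> mv x v <= x w.
Proof. by move=> wb; rewrite /mv (bigD1 w) //= ge_min lexx. Qed.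
Lemma mv_ge0 x v : (forall w, w \in blk v -> 0 <= x w) -> 0 <= mv x v.
Proof.
move=> h; rewrite /mv; apply: (big_ind (fun y => 0 <= y)) => //.
by move=> a b a0 b0; rewrite le_min a0 b0.
Qed.
Lemma mv_att x v : mv x v = 1 \/ exists2 w, w \in blk v & mv x v = x w.
Proof.
rewrite /mv; apply: (big_ind (fun y => y = 1 \/ exists2 w, w \in blk v & y = x w)).
- by left.
- move=> a b ha hb; case: (leP a b) => _; [exact: ha | exact: hb].
- by move=> w wb; right; exists w.
Qed.

Lemma sv_ge0 t x v : 0 <= t -> 0 <= sv t x v.
Proof. by move=> t0; rewrite /sv mulr_ge0 // subr_ge0 mv_le1. Qed.

Lemma H_zero t x v : 0 <= t -> x v = 0 -> Hm (t, x) v = 0.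
Proof.
move=> t0 xv; rewrite /Hm /= xv; apply: cl_le0.
have := sv_ge0 t x v t0; set s := sv _ _ _ => s0; nra.
Qed.

Lemma H01 p v : 0 <= Hm p v <= 1.
Proof. exact: cl01. Qed.

Lemma H_at0 x v : 0 <= x v <= 1 -> Hm (0, x) v = x v.
Proof. by move=> h; rewrite /Hm /sv /= mul0r mulr0 addr0 subr0 mul1r cl_id. Qed.

Lemma H_at1 i x v w : v \in A i -> w \in A i -> x w = 0 ->
  (forall u, u \in A i -> 0 <= x u <= 1) -> Hm (1, x) v = 0.
Proof.
move=> vi wi xw hb.
have m0 : mv x v = 0.
  apply/eqP; rewrite eq_le; apply/andP; split.
    by rewrite -xw; apply: mv_le; rewrite (blkE vi).
  by apply: mv_ge0 => u; rewrite (blkE vi) => /hb /andP[].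
rewrite /Hm /sv /= m0 subr0 mul1r; apply: cl_le0.
have /andP[_ h1] := hb v vi; nra.
Qed.


Lemma H_inS t x i : 0 <= t <= 1 -> inS A x i -> inS A (Hm (t, x)) i.
Proof.
case/andP=> t0 t1 [hb [w wi hw]]; split; first by move=> v _; exact: H01.
case: hw => hw; first by exists w => //; left; exact: H_zero.
have mle : mv x w <= 1 := mv_le1 x w.
have sle : sv t x w <= 1 - mv x w by rewrite /sv; nra.
have s0 : 0 <= sv t x w := sv_ge0 t x w t0.
case: (lerP (sv t x w) (1/2)) => hs.
  exists w => //; right; rewrite /Hm /= hw; apply: cl_ge1.
  set s := sv _ _ _ in hs s0 *; nra.
case: (mv_att x w) => [m1|[b bb mb]].
  by move: hs; rewrite /sv m1 subrr mulr0; lra.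
rewrite (blkE wi) in bb; exists b => //; left.
rewrite /Hm /=; apply: cl_le0.
have e : sv t x b = sv t x w by rewrite /sv /mv (blkE wi) (blkE bb).
rewrite e -mb; set s := sv _ _ _ in hs s0 sle *; set m := mv _ _ in sle *; nra.
Qed.
End H.
Arguments blk {V r} A v.
Arguments mv {R V r} A x v.
Arguments sv {R V r} A t x v.
Arguments Hm {R V r} A p _.


Section C.
Local Open Scope ring_scope.
Variables (R : realType) (T : topologicalType).
Implicit Types f g : T -> R.
Lemma cD f g : continuous f -> continuous g -> continuous (fun q => f q + g q).
Proof. by move=> cf cg q; apply: cvgD; [apply: cf|apply: cg]. Qed.
Lemma cB f g : continuous f -> continuous g -> continuous (fun q => f q - g q).
Proof. by move=> cf cg q; apply: cvgB; [apply: cf|apply: cg]. Qed.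
Lemma cM f g : continuous f -> continuous g -> continuous (fun q => f q * g q).
Proof. by move=> cf cg q; apply: cvgM; [apply: cf|apply: cg]. Qed.
Lemma cC (c : R) : continuous (fun _ : T => c).
Proof. by move=> q; apply: cvg_cst. Qed.
Lemma cmin f g : continuous f -> continuous g -> continuous (fun q => Num.min (f q) (g q)).
Proof. by move=> cf cg q; apply: (@continuous_min R T f g q); [apply: cf|apply: cg]. Qed.
Lemma cmax f g : continuous f -> continuous g -> continuous (fun q => Num.max (f q) (g q)).
Proof. by move=> cf cg q; apply: (@continuous_max R T f g q); [apply: cf|apply: cg]. Qed.
Lemma cbig (I : Type) (l : seq I) (P : pred I) (F : I -> T -> R) :
  (forall i, continuous (F i)) ->
  continuous (fun q => \big[Num.min/1]_(i <- l | P i) F i q).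
Proof.
move=> cF; elim: l => [|i l IH].
  by under eq_fun do rewrite big_nil; apply: cC.
case Pi: (P i).
  under eq_fun do rewrite big_cons Pi.
  exact: cmin.
by under eq_fun do rewrite big_cons Pi.
Qed.
End C.

Section S.
Local Open Scope ring_scope.
Local Open Scope classical_set_scope.
Variables (R : realType) (V : finType).
Let X := {ptws V -> R}.

Lemma ev_cont (w : V) : continuous (fun f : X => f w).
Proof. exact: (@proj_continuous V (fun _ => R) w). Qed.

Lemma ptws_cvg (F : set_system X) (f : X) : Filter F ->
  (forall v, (fun g : X => g v) @ F --> f v) -> F --> f.
Proof.
move=> FF h.
apply/cvg_sup => i.
apply/cvg_image.
  rewrite eqEsubset; split => y // _; exists (fun _ => y) => //.
move=> B /= Bn.
exists ((fun g : X => g i) @^-1` B); first exact: h.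
rewrite image_preimage //.
rewrite eqEsubset; split => y // _; exists (fun _ => y) => //.
Qed.

End S.

Section Main.
Local Open Scope ring_scope.
Variables (R : realType) (V : finType) (r : nat) (A : 'I_r -> {set V}).
Local Notation X := {ptws V -> R}.

Lemma Hcont (T : topologicalType) (tf : T -> R) (xf : T -> X) :
  continuous tf -> continuous xf -> continuous (fun q => (Hm A (tf q, xf q) : X)).
Proof.
move=> ct cx.
have ce : forall w, continuous (fun q => xf q w).
  move=> w q; exact: (@continuous_comp _ _ _ xf (fun g : X => g w) q (cx q) (@ev_cont R V w (xf q))).
have hv : forall v, continuous (fun q => Hm A (tf q, xf q) v).
  move=> v; rewrite /Hm /cl /sv /mv /=.
  apply: cmax; first exact: cC.
  apply: cmin; first exact: cC.
  have cm : continuous (fun q => \big[Num.min/1]_(w in blk A v) xf q w).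
    by apply: cbig => w.
  have cs : continuous (fun q => tf q * (1 - \big[Num.min/1]_(w in blk A v) xf q w)).
    by apply: cM => //; apply: cB => //; exact: cC.
  apply: cM.
    apply: cD; first exact: cC.
    by apply: cM => //; exact: cC.
  by apply: cB.
move=> q; apply: ptws_cvg => v; exact: hv q.
Qed.
End Main.

Local Open Scope classical_set_scope.
Local Open Scope ring_scope.

Theorem lemma4p3 (R : realType) (V : finType) (r : nat)
  (A : 'I_r -> {set V}) :
  (0 < r)%N ->
  (forall i, A i != finset.set0) ->
  (forall i j, i != j -> [disjoint A i & A j]%B) ->
  (\bigcup_(i < r) A i = [set: V])%SET ->
  RZ R (join_bdry A) =
    [set x : {ptws V -> R} | forall i : 'I_r,
       RZ R (bdry_simplex [set: vert (A i)]) (fun a => x (val a))]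
  /\
  homotopy_equivalence_on R (fat_wedge R A)
    (RZfw R (join_bdry A) (\sum_(i < r) #|A i|).-1) id.
Proof.
move=> r0 Ane Adis Acov.
have RZL x : RZ R (join_bdry A) x <-> forall i, inS A x i := @RZ_L R V r A Adis Acov x.
have cov v : exists2 j, true & v \in A j := @covP0 V r A Acov v.
have in01 (x : V -> R) : (forall i, inS A x i) -> forall v, 0 <= x v <= 1.
  by move=> h v; have [j _ vj] := cov v; exact: (h j).1 v vj.
split.
  apply/seteqP; split => x /=.
    by move/RZL => h i; apply/(@RZ_b R V r A i x).
  by move=> h; apply/RZL => i; apply/(@RZ_b R V r A i x).
have n0 : (0 < #|V|)%N.
  case/finset.set0Pn: (Ane (Ordinal r0)) => v _; apply/card_gt0P; by exists v.
have FW x : fat_wedge R A x <-> (forall i, inS A x i) /\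
    exists i, forall v, v \in A i -> x v = 0.
  by rewrite /fat_wedge /=; split => -[h1 h2]; split => //; apply/RZL.
have BE x : RZfw R (join_bdry A) (\sum_(i < r) #|A i|).-1 x <->
    (forall i, inS A x i) /\ exists v, x v = 0.
  rewrite /RZfw /= (@sumA V r A Adis Acov).
  have -> : (#|V| - #|V|.-1 = 1)%N by move: n0; case: #|V| => // n _; rewrite subSnn.
  split => -[h1 h2]; (split; first exact/RZL).
    by case/card_gt0P: h2 => v; rewrite in_setE => /eqP xv; exists v.
  by case: h2 => v xv; apply/card_gt0P; exists v; rewrite in_setE /= xv.
pose g : {ptws V -> R} -> {ptws V -> R} := fun x => Hm A (1, x).
pose K : R * {ptws V -> R} -> {ptws V -> R} := fun p => Hm A (1 - p.1, p.2).
have Kc : continuous K.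
  apply: (@Hcont R V r A _ (fun p : R * {ptws V -> R} => 1 - p.1) snd).
    by apply: cB; [exact: cC | move=> p; exact: cvg_fst].
  by move=> p; exact: cvg_snd.
have gc : continuous g.
  by apply: (@Hcont R V r A _ (fun _ => 1) id); [exact: cC | move=> p; exact: cvg_id].
have KT t x : 0 <= t <= 1 -> (forall i, inS A x i) -> forall i, inS A (K (t, x)) i.
  move=> /andP[t0 t1] h i; apply: (@H_inS R V r A Adis) => //=.
  by apply/andP; split; lra.
have Kz t x v : 0 <= t <= 1 -> x v = 0 -> K (t, x) v = 0.
  by move=> /andP[t0 t1] xv; apply: H_zero => //=; lra.
have K0 x : K (0, x) = g x by rewrite /K /g /= subr0.
have K1 x : (forall i, inS A x i) -> K (1, x) = x.
  move=> h; apply/funext => v; rewrite /K /= subrr; apply: H_at0; exact: in01.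
split.
- by apply: continuous_subspaceT => x; exact: cvg_id.
- move=> x /FW [h [i hi]]; apply/BE; split => //.
  by case/finset.set0Pn: (Ane i) => v vA; exists v; exact: hi.
- exists g; split.
  + exact: continuous_subspaceT.
  + move=> x /BE [h [v xv]]; apply/FW; split.
      by move=> i; apply: (@H_inS R V r A Adis) => //; rewrite lexx ler01.
    have [j _ vj] := cov v; exists j => u uj.
    exact: (@H_at1 R V r A Adis j x u v uj vj xv (h j).1).
  + exists K; split.
    * exact: continuous_subspaceT.
    * move=> t x ht /FW [h [i hi]]; apply/FW; split; first exact: KT.
      by exists i => v vi; apply: Kz => //; exact: hi.
    * by move=> x _; exact: K0.
    * by move=> x /FW [h _]; exact: K1.
  + exists K; split.
    * exact: continuous_subspaceT.
    * move=> t x ht /BE [h [v xv]]; apply/BE; split; first exact: KT.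
      by exists v; apply: Kz.
    * by move=> x _; exact: K0.
    * by move=> x /BE [h _]; exact: K1.
Qed.
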